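(* Let $d\ge2$ and let $O_+$ be the operator on $(\mathbb{C}^d)^{\otimes3}$ given by $O_+=\sum_{\vec a\in\mathbb{Z}_d^3}O_+(\vec a)|\vec a\rangle\langle\vec a|$ with $O_+(\vec a)=1+(-d)^{wt(\vec a)-1}$. Define $Q_3=O_+^2$; $Q_4=\sum_{\vec a\in\mathbb{Z}_d^4}O_+(a_1a_2a_3)O_+(a_1a_2a_4)|\vec a\rangle\langle\vec a|$; $Q_5=\sum_{\vec a\in\mathbb{Z}_d^5}O_+(a_1a_2a_3)O_+(a_1a_4a_5)|\vec a\rangle\langle\vec a|$; $Q_6=O_+\otimes O_+=\sum_{\vec a\in\mathbb{Z}_d^6}O_+(a_1a_2a_3)O_+(a_4a_5a_6)|\vec a\rangle\langle\vec a|$. Then for each $t\in\{3,4,5,6\}$ there exists $d_0$ such that for all $d\ge d_0$ and every conjugacy class $\xi$ of $S_t$, $\sum_{\pi\in\xi}\mathrm{Tr}[W_\pi Q_t]>0$.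
   Context: For a 3-dit string $\vec a=(a_1,a_2,a_3)$, $wt(\vec a)$ is the largest number of equal entries: $wt=1$ if all entries are distinct, $wt=2$ if exactly two coincide, $wt=3$ if all three coincide; so $O_+(\vec a)$ equals $2$, $1-d$, $1+d^2$ respectively. $O_+(a_ia_ja_k)$ means $O_+$ evaluated on the string $(a_i,a_j,a_k)$. $W_\pi$ ($\pi\in S_t$) is the permutation operator on $(\mathbb{C}^d)^{\otimes t}$ permuting tensor factors. *)

(* Defs.v *)
From HB Require Import structures.
From mathcomp Require Import all_boot all_order all_algebra all_fingroup.
Set Implicit Arguments. Unset Strict Implicit. Unset Printing Implicit Defensive.
Import Order.TTheory GRing.Theory Num.Theory.
Local Open Scope ring_scope.

(* Operators on (C^d)^{\otimes t} are represented by their matrices in the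
   computational basis |a>, a : {ffun 'I_t -> 'I_d} (a_i = a (i-1)).
   All matrices involved have integer entries, so we work over int. *)
Definition kmx (T : finType) := T -> T -> int.

Definition kmul (T : finType) (A B : kmx T) : kmx T :=
  fun x y => \sum_(z : T) A x z * B z y.

Definition ktrace (T : finType) (A : kmx T) : int := \sum_(x : T) A x x.

Definition kdiag (T : finType) (q : T -> int) : kmx T :=
  fun x y => (x == y)%:R * q x.

Definition Wperm (t d : nat) (pi : {perm 'I_t}) : kmx {ffun 'I_t -> 'I_d} :=
  fun x y => (x == [ffun i => y ((pi^-1)%g i)])%:R.

Definition wt3 (d : nat) (x y z : 'I_d) : nat :=
  if (x == y) && (y == z) then 3%N
  else if [|| x == y, y == z | x == z] then 2%N else 1%N.

Definition Oplus (d : nat) (x y z : 'I_d) : int :=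
  1 + (- (d%:Z)) ^+ (wt3 x y z).-1.

(* a_k for a 1-based index k *)
Definition ent (t d : nat) (a : {ffun 'I_t.+1 -> 'I_d}) (k : nat) : 'I_d :=
  a (inord k.-1).

Definition q3 (d : nat) (a : {ffun 'I_3 -> 'I_d}) : int :=
  (Oplus (ent a 1) (ent a 2) (ent a 3)) ^+ 2.
Definition q4 (d : nat) (a : {ffun 'I_4 -> 'I_d}) : int :=
  Oplus (ent a 1) (ent a 2) (ent a 3) * Oplus (ent a 1) (ent a 2) (ent a 4).
Definition q5 (d : nat) (a : {ffun 'I_5 -> 'I_d}) : int :=
  Oplus (ent a 1) (ent a 2) (ent a 3) * Oplus (ent a 1) (ent a 4) (ent a 5).
Definition q6 (d : nat) (a : {ffun 'I_6 -> 'I_d}) : int :=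
  Oplus (ent a 1) (ent a 2) (ent a 3) * Oplus (ent a 4) (ent a 5) (ent a 6).

Definition Qop (t d : nat) (q : {ffun 'I_t -> 'I_d} -> int) :=
  kdiag q.

Definition class_sums_eventually_pos (t : nat)
    (q : forall d : nat, {ffun 'I_t -> 'I_d} -> int) : Prop :=
  exists d0 : nat, forall d : nat, (d0 <= d)%N -> (2 <= d)%N ->
    forall xi : {set {perm 'I_t}}, xi \in classes [set: {perm 'I_t}] ->
      0 < \sum_(pi in xi) ktrace (kmul (@Wperm t d pi) (Qop (q d))).

(* Main.v *)
Require Import Defs.
From HB Require Import structures.
From Stdlib Require Import ZArith.
From mathcomp Require Import all_boot all_order all_algebra all_fingroup.
From mathcomp Require Import zify ssrZ ring lra.
Set Implicit Arguments. Unset Strict Implicit. Unset Printing Implicit Defensive.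
Import Order.TTheory GRing.Theory Num.Theory.

Fixpoint pAdd (p q : seq Z) : seq Z := match p, q with
 | [::], _ => q | _, [::] => p | a :: p', b :: q' => Z.add a b :: pAdd p' q' end.
Definition pScale (c : Z) (p : seq Z) := map (Z.mul c) p.
Fixpoint pMul (p q : seq Z) := match p with [::] => [::] | a :: p' => pAdd (pScale a q) (Z0 :: pMul p' q) end.
Definition pShift (p : seq Z) := foldr (fun c acc => pAdd [:: c] (pMul [:: Zpos 2%positive; Zpos 1%positive] acc)) [::] p.
Definition posok (p : seq Z) := Z.ltb Z0 (head Z0 p) && all (Z.leb Z0) p.

Local Open Scope ring_scope.
Definition pevalI (p : seq Z) (x : int) : int := foldr (fun c acc => int_of_Z c + x * acc) 0 p.

Lemma ioZD a b : int_of_Z (Z.add a b) = int_of_Z a + int_of_Z b.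
Proof. exact: (raddfD int_of_Z a b). Qed.
Lemma ioZM a b : int_of_Z (Z.mul a b) = int_of_Z a * int_of_Z b.
Proof. exact: (rmorphM int_of_Z a b). Qed.

Lemma pevalD p q x : pevalI (pAdd p q) x = pevalI p x + pevalI q x.
Proof.
elim: p q => [|a p IH] [|b q] /=; rewrite ?add0r ?addr0 //.
by rewrite ioZD IH mulrDr; ring.
Qed.

Lemma pevalS c p x : pevalI (pScale c p) x = int_of_Z c * pevalI p x.
Proof.
elim: p => [|a p IH] /=; first by rewrite mulr0.
by rewrite ioZM IH; ring.
Qed.

Lemma pevalM p q x : pevalI (pMul p q) x = pevalI p x * pevalI q x.
Proof.
elim: p => [|a p IH]; first by rewrite /= mul0r.
have -> : pMul (a :: p) q = pAdd (pScale a q) (Z0 :: pMul p q) by [].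
by rewrite pevalD pevalS /= IH; ring.
Qed.

Lemma pevalSh p x : pevalI (pShift p) x = pevalI p (x + 2).
Proof.
elim: p => [|a p IH] //.
have -> : pShift (a :: p) = pAdd [:: a] (pMul [:: Zpos 2%positive; Zpos 1%positive] (pShift p)) by [].
rewrite pevalD pevalM IH /=.
have -> : Pos.to_nat 2 = 2%N by [].
have -> : Pos.to_nat 1 = 1%N by [].
ring.
Qed.

Lemma ioZ_ge0 c : (Z.leb Z0 c) -> 0 <= int_of_Z c.
Proof. by case: c. Qed.

Lemma ioZ_gt0 c : (Z.ltb Z0 c) -> 0 < int_of_Z c.
Proof. case: c => //= p _. have := Pos2Nat.is_pos p. lia. Qed.

Lemma peval_ge0 p x : all (Z.leb Z0) p -> 0 <= x -> 0 <= pevalI p x.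
Proof.
elim: p => [|a p IH] //= /andP[ha hp] hx.
by rewrite addr_ge0 ?ioZ_ge0 // mulr_ge0 // IH.
Qed.

Lemma posok_gt0 p x : posok p -> 0 <= x -> 0 < pevalI p x.
Proof.
case: p => [|a p] //= /andP[ha /andP[_ hp]] hx.
by rewrite ltr_wpDr ?ioZ_gt0 // mulr_ge0 // peval_ge0.
Qed.

Local Open Scope nat_scope.
Definition rgs (s : seq nat) : seq nat := [seq index v (undup s) | v <- s].
Fixpoint lists (n m : nat) : seq (seq nat) :=
  if n is n'.+1 then [seq v :: r | v <- iota 0 m, r <- lists n' m] else [:: [::]].
Definition Rgs t := [seq r <- lists t t | rgs r == r].

Lemma mem_lists n m r : (r \in lists n m) = (size r == n) && all (fun v => v < m) r.
Proof.
elim: n r => [|n IH] [|v r] //=.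
  apply/allpairsP => -[[a b] [_ _]] //.
apply/allpairsP/idP => [[[a b] [/= ha hb [-> ->]]]|].
  by move: hb; rewrite IH mem_iota /= in ha * => /andP[/eqP -> ->]; rewrite eqxx ha.
move=> /andP[hs /andP[hv hr]]; exists (v, r); split => //=.
  by rewrite mem_iota.
by rewrite IH -eqSS hs.
Qed.

Lemma uniq_lists n m : uniq (lists n m).
Proof.
elim: n => [|n IH] //=.
apply: allpairs_uniq => //; first exact: iota_uniq.
by move=> [a b] [c e] _ _ /= [-> ->].
Qed.

Lemma uniq_Rgs t : uniq (Rgs t).
Proof. exact/filter_uniq/uniq_lists. Qed.

Lemma undup_map_in (f : nat -> nat) s : {in s &, injective f} ->
  undup (map f s) = map f (undup s).
Proof.
elim: s => [|a s IH] //= Hf.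
have Hf' : {in s &, injective f} by move=> x y hx hy; apply: Hf; rewrite inE ?hx ?hy orbT.
have -> : (f a \in map f s) = (a \in s).
  apply/mapP/idP => [[b hb /Hf]|ha]; last by exists a.
  by move=> -> //; rewrite inE ?hb ?eqxx ?orbT.
by case: (a \in s) => //=; rewrite IH.
Qed.

Lemma index_map_in (f : nat -> nat) s v : {in s &, injective f} -> v \in s ->
  index (f v) (map f s) = index v s.
Proof.
elim: s => [|a s IH] //= Hf.
have Hf' : {in s &, injective f} by move=> x y hx hy; apply: Hf; rewrite inE ?hx ?hy orbT.
rewrite inE => hv.
have -> : (f a == f v) = (a == v).
  apply/eqP/eqP => [|-> //]; apply: Hf; rewrite ?inE ?eqxx //.
case: eqP => [// | hav] /=; congr S; apply: IH => //.
by case/orP: hv => // /eqP e; case: hav.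
Qed.

Lemma rgs_map (f : nat -> nat) s : {in s &, injective f} -> rgs (map f s) = rgs s.
Proof.
move=> Hf; rewrite /rgs undup_map_in // -map_comp; apply/eq_in_map => v hv /=.
apply: index_map_in; last by rewrite mem_undup.
by move=> x y; rewrite !mem_undup; apply: Hf.
Qed.

Lemma idx_inj (s : seq nat) : {in s &, injective (fun v : nat => index v (undup s))}.
Proof.
move=> v w hv hw e.
by rewrite -(nth_index 0 (s := undup s) (x := v)) ?mem_undup // e nth_index ?mem_undup.
Qed.

Lemma rgs_idem s : rgs (rgs s) = rgs s.
Proof. by have := rgs_map (@idx_inj s). Qed.

Lemma nth_map_eq (f : nat -> nat) s i j : {in s &, injective f} -> i < size s -> j < size s ->
  (nth 0 (map f s) i == nth 0 (map f s) j) = (nth 0 s i == nth 0 s j).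
Proof.
move=> Hf hi hj; rewrite !(nth_map 0) //.
apply/eqP/eqP => [|->//]. by move/Hf; apply; apply: mem_nth.
Qed.

Lemma rgs_pat s s' : size s = size s' ->
  (forall i j, i < size s -> j < size s -> (nth 0 s i == nth 0 s j) = (nth 0 s' i == nth 0 s' j)) ->
  rgs s' = rgs s.
Proof.
move=> hsz hp.
pose f v := nth 0 s' (index v s).
have hf : {in s &, injective f}.
  move=> v w hv hw /eqP; rewrite /f -hp ?index_mem // !nth_index //; by move/eqP.
have -> : s' = map f s.
  apply: (@eq_from_nth _ 0); first by rewrite size_map.
  move=> i; rewrite -hsz => hi; rewrite (nth_map 0) //; apply/eqP; rewrite /f -hp ?index_mem ?mem_nth //.
  by rewrite nth_index ?mem_nth.
exact: rgs_map.
Qed.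

Lemma map_index_uniq (u : seq nat) : uniq u -> map (fun v => index v u) u = iota 0 (size u).
Proof.
move=> hu.
transitivity [seq index v u | v <- map (nth 0 u) (iota 0 (size u))].
  by rewrite -/(mkseq (nth 0 u) (size u)) mkseq_nth.
rewrite -map_comp -[RHS]map_id; apply/eq_in_map => j; rewrite mem_iota /= => hj.
by rewrite index_uniq.
Qed.

Lemma rgs_undup r : rgs r = r -> undup r = iota 0 (size (undup r)).
Proof.
move=> hr; rewrite -{1}hr /rgs undup_map_in; last exact: idx_inj.
by rewrite map_index_uniq // undup_uniq.
Qed.

Lemma rgs_size s : size (rgs s) = size s.
Proof. by rewrite size_map. Qed.

Lemma rgs_lt s v : v \in rgs s -> v < size s.
Proof.
case/mapP => w hw ->; apply: leq_trans (size_undup s).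
by rewrite index_mem mem_undup.
Qed.

Lemma rgs_in_Rgs s : rgs s \in Rgs (size s).
Proof.
rewrite mem_filter rgs_idem eqxx /= mem_lists rgs_size eqxx /=.
by apply/allP => v; apply: rgs_lt.
Qed.

Lemma Rgs_prop t r : r \in Rgs t -> size r = t /\ rgs r = r.
Proof. by rewrite mem_filter mem_lists => /andP[/eqP -> /andP[/eqP -> _]]. Qed.

Local Open Scope ring_scope.
Definition sx t d (x : {ffun 'I_t -> 'I_d}) : seq nat := [seq val (x i) | i <- enum 'I_t].

Lemma size_sx t d (x : {ffun 'I_t -> 'I_d}) : size (sx x) = t.
Proof. by rewrite size_map size_enum_ord. Qed.

Lemma nth_sx t d (x : {ffun 'I_t -> 'I_d}) (i : 'I_t) : nth 0%N (sx x) i = x i.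
Proof. by rewrite (nth_map i) ?size_enum_ord // nth_ord_enum. Qed.

Lemma eq_sx t d (x : {ffun 'I_t -> 'I_d}) (i j : 'I_t) :
  (nth 0%N (sx x) i == nth 0%N (sx x) j) = (x i == x j).
Proof. by rewrite !nth_sx. Qed.

Lemma eq_sx_nat t d (x : {ffun 'I_t -> 'I_d}) i j (hi : (i < t)%N) (hj : (j < t)%N) :
  (nth 0%N (sx x) i == nth 0%N (sx x) j) = (x (Ordinal hi) == x (Ordinal hj)).
Proof. exact: (eq_sx x (Ordinal hi) (Ordinal hj)). Qed.

Lemma card_fiber t d r : r \in Rgs t ->
  #|[set x : {ffun 'I_t -> 'I_d} | rgs (sx x) == r]| = (d ^_ (size (undup r)))%N.
Proof.
case/Rgs_prop => hsz hr.
set k := size (undup r).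
have hu := rgs_undup hr.
have memr v : (v \in r) = (v < k)%N by rewrite -mem_undup hu mem_iota.
have ri_lt (i : 'I_t) : (nth 0%N r i < k)%N by rewrite -memr mem_nth // hsz.
have idx_lt (j : 'I_k) : (index (val j) r < t)%N by rewrite -hsz index_mem memr ltn_ord.
have nth_idx (j : 'I_k) : nth 0%N r (index (val j) r) = j by rewrite nth_index // memr ltn_ord.
have pat (x : {ffun 'I_t -> 'I_d}) (i j : 'I_t) : rgs (sx x) = r -> (x i == x j) = (nth 0%N r i == nth 0%N r j).
  move=> e; rewrite -e /rgs nth_map_eq ?size_sx //; last exact: idx_inj.
  by rewrite eq_sx.
pose phi (x : {ffun 'I_t -> 'I_d}) : {ffun 'I_k -> 'I_d} := [ffun j => x (Ordinal (idx_lt j))].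
rewrite -(card_in_imset (f := phi)).
  have -> : phi @: [set x | rgs (sx x) == r] = [set g : {ffun 'I_k -> 'I_d} | injectiveb g].
    apply/setP => g; rewrite inE; apply/imsetP/idP.
      move=> [x]; rewrite inE => /eqP hx ->; apply/injectiveP => j1 j2; rewrite !ffunE.
      move/eqP; rewrite pat // /= !nth_idx => /eqP; apply: val_inj.
    move/injectiveP => hg.
    pose x := [ffun i => g (Ordinal (ri_lt i))].
    exists x.
      rewrite inE; apply/eqP.
      rewrite -[RHS]hr; apply: rgs_pat; first by rewrite size_sx hsz.
      move=> i j; rewrite hsz => hi hj.
      by rewrite (eq_sx_nat x hi hj) !ffunE (inj_eq hg).
    apply/ffunP => j; rewrite !ffunE; congr (g _); by apply: val_inj => /=; rewrite nth_idx.
  by rewrite card_inj_ffuns !card_ord.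
move=> x y; rewrite !inE => /eqP hx /eqP hy /ffunP he; apply/ffunP => i.
have e1 (z : {ffun 'I_t -> 'I_d}) : rgs (sx z) = r -> z i = z (Ordinal (idx_lt (Ordinal (ri_lt i)))).
  by move=> hz; apply/eqP; rewrite pat // (nth_idx (Ordinal (ri_lt i))).
by rewrite (e1 x hx) (e1 y hy); have := he (Ordinal (ri_lt i)); rewrite !ffunE.
Qed.

Lemma sum_pick (R : seq (seq nat)) h (G : seq nat -> int) : uniq R -> h \in R ->
  \sum_(r <- R) (h == r)%:R * G r = G h.
Proof.
elim: R => //= a R IH /andP[ha hu]; rewrite inE big_cons => /orP[/eqP ->|hh].
  rewrite eqxx mul1r big1_seq ?addr0 // => r /andP[_ hr].
  have -> : (a == r) = false by apply/negbTE; apply: contraNneq ha => ->.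
  by rewrite mul0r.
have -> : (h == a) = false by apply/negbTE; apply: contraNneq ha => <-.
by rewrite mul0r add0r IH.
Qed.

Lemma core t d (F : seq nat -> int)
  (HF : forall r (f : nat -> nat), size r = t -> {in r &, injective f} -> F (map f r) = F r) :
  \sum_(x : {ffun 'I_t -> 'I_d}) F (sx x) = \sum_(r <- Rgs t) F r * (d ^_ (size (undup r)))%:R.
Proof.
have step1 (x : {ffun 'I_t -> 'I_d}) : F (sx x) = F (rgs (sx x)) by rewrite /rgs HF ?size_sx //; exact: idx_inj.
have step2 (x : {ffun 'I_t -> 'I_d}) : F (sx x) = \sum_(r <- Rgs t) (rgs (sx x) == r)%:R * F r.
  rewrite step1 sum_pick //; first exact: uniq_Rgs.
  by have := rgs_in_Rgs (sx x); rewrite size_sx.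
rewrite (eq_bigr _ (fun x _ => step2 x)) exchange_big /=.
apply: eq_big_seq => r hr.
have -> : \sum_(x : {ffun 'I_t -> 'I_d}) (rgs (sx x) == r)%:R * F r = \sum_(x in [set x : {ffun 'I_t -> 'I_d} | rgs (sx x) == r]) F r.
  symmetry; rewrite big_mkcond; apply: eq_bigr => x _; rewrite inE; case: eqP => _.
    by rewrite mul1r. by rewrite mul0r.
by rewrite sumr_const card_fiber // mulr_natr.
Qed.

Definition wtn (x y z : nat) : nat :=
  if (x == y) && (y == z) then 3%N else if [|| x == y, y == z | x == z] then 2%N else 1%N.
Definition wtp (r : seq nat) (A : nat * nat * nat) :=
  wtn (nth 0%N r A.1.1) (nth 0%N r A.1.2) (nth 0%N r A.2).
Definition compat t (l r : seq nat) :=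
  all (fun i => nth 0%N r i == nth 0%N r (nth 0%N l i)) (iota 0 t).
Definition Ov (d : nat) (w : nat) : int := 1 + (- (d%:Z)) ^+ w.-1.

Definition ovp (w : nat) : seq Z :=
  pAdd [:: Zpos 1%positive] (rcons (nseq w.-1 Z0) (if odd w.-1 then Zneg 1%positive else Zpos 1%positive)).
Fixpoint ffp (k : nat) : seq Z :=
  if k is k'.+1 then pMul (ffp k') [:: Z.opp (Z.of_nat k'); Zpos 1%positive] else [:: Zpos 1%positive].
Definition gpoly (w1 w2 k : nat) := pMul (pMul (ovp w1) (ovp w2)) (ffp k).
Definition Psum t A B (R : seq (seq nat)) l :=
  foldr (fun r acc => if compat t l r then pAdd (gpoly (wtp r A) (wtp r B) (size (undup r))) acc else acc) [::] R.
Definition chk t A B := let R := Rgs t in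
  all (fun l => posok (pShift (Psum t A B R l))) (permutations (iota 0 t)).

Lemma peval_rc n c x : pevalI (rcons (nseq n Z0) c) x = int_of_Z c * x ^+ n.
Proof.
elim: n => [|n IH] /=; first by rewrite mulr0 addr0 expr0 mulr1.
by rewrite IH exprS /=; ring.
Qed.

Lemma peval_ovp d w : pevalI (ovp w) d%:Z = Ov d w.
Proof.
rewrite /ovp pevalD peval_rc /Ov /= mulr0 addr0 exprNn -signr_odd.
by case: (odd w.-1).
Qed.

Lemma ioZ_nat k : int_of_Z (Z.of_nat k) = k%:Z.
Proof. case: k => //= k; congr Posz; exact: SuccNat2Pos.id_succ. Qed.

Lemma peval_ffp d k : pevalI (ffp k) d%:Z = (d ^_ k)%:R.
Proof.
elim: k => [|k IH]; first by rewrite /= mulr0 addr0.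
rewrite /= pevalM IH /= ffactnSr natrM.
have -> : int_of_Z (Z.opp (Z.of_nat k)) = - k%:Z.
  rewrite -ioZ_nat; exact: (raddfN int_of_Z (Z.of_nat k)).
case: (leqP k d) => hk.
  have -> : Pos.to_nat 1 = 1%N by []. by rewrite natrB // !natz; ring.
by rewrite ffact_small // !mul0r.
Qed.

Lemma peval_Psum t A B R l d :
  pevalI (Psum t A B R l) d%:Z =
  \sum_(r <- R) (compat t l r)%:R * (Ov d (wtp r A) * Ov d (wtp r B)) * (d ^_ size (undup r))%:R.
Proof.
elim: R => [|r R IH]; first by rewrite big_nil.
rewrite big_cons /= -IH; case: (compat t l r) => /=.
  by rewrite pevalD /gpoly !pevalM !peval_ovp peval_ffp mul1r.
by rewrite mul0r mul0r add0r.
Qed.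

Lemma all_iota_forall t (P : nat -> bool) : all P (iota 0 t) = [forall i : 'I_t, P i].
Proof.
apply/allP/forallP => [H i|H i]; first by apply: H; rewrite mem_iota /=.
by rewrite mem_iota => /andP[_ hi]; exact: (H (Ordinal hi)).
Qed.

Lemma trace_eq t d (pi : {perm 'I_t}) (q : {ffun 'I_t -> 'I_d} -> int) :
  ktrace (kmul (@Wperm t d pi) (Qop q)) =
  \sum_(x : {ffun 'I_t -> 'I_d}) (x == [ffun i => x ((pi^-1)%g i)])%:R * q x.
Proof.
rewrite /ktrace /kmul /Qop /kdiag; apply: eq_bigr => x _.
rewrite (bigD1 x) //= eqxx mul1r big1 ?addr0 // => z hz.
by rewrite (negbTE hz) mul0r mulr0.
Qed.

Lemma fix_compat t d (pi : {perm 'I_t}) (x : {ffun 'I_t -> 'I_d}) :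
  (x == [ffun i => x ((pi^-1)%g i)]) = compat t (sx [ffun i => (pi^-1)%g i]) (sx x).
Proof.
rewrite /compat all_iota_forall; apply/eqP/forallP => [hx i|H].
  by rewrite !nth_sx ?ffunE ?nth_sx {1}hx ffunE.
apply/ffunP => i; rewrite ffunE; apply/eqP; move: (H i).
by rewrite !nth_sx ?ffunE ?nth_sx.
Qed.

Lemma main t (A B : nat * nat * nat) (q : forall d, {ffun 'I_t -> 'I_d} -> int)
  (HA : (A.1.1 < t)%N && (A.1.2 < t)%N && (A.2 < t)%N)
  (HB : (B.1.1 < t)%N && (B.1.2 < t)%N && (B.2 < t)%N)
  (Hq : forall d x, q d x = Ov d (wtp (sx x) A) * Ov d (wtp (sx x) B))
  (Hc : chk t A B) : class_sums_eventually_pos q.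
Proof.
have Hpos d (pi : {perm 'I_t}) : (2 <= d)%N -> 0 < ktrace (kmul (@Wperm t d pi) (Qop (q d))).
  move=> hd; rewrite trace_eq.
  set l := sx [ffun i => (pi^-1)%g i].
  have hl i : (i < t)%N -> (nth 0%N l i < t)%N.
    by move=> hi; have := nth_sx [ffun i => (pi^-1)%g i] (Ordinal hi); rewrite ffunE => ->.
  under eq_bigr do rewrite fix_compat Hq -/l.
  rewrite (@core t d (fun r => (compat t l r)%:R * (Ov d (wtp r A) * Ov d (wtp r B)))); last first.
    move=> r f hr hf.
    have e i j : (i < t)%N -> (j < t)%N -> (nth 0%N (map f r) i == nth 0%N (map f r) j) = (nth 0%N r i == nth 0%N r j).
      by move=> hi hj; apply: nth_map_eq; rewrite ?hr.
    have ew (C : nat * nat * nat) : (C.1.1 < t)%N && (C.1.2 < t)%N && (C.2 < t)%N -> wtp (map f r) C = wtp r C.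
      by case/andP => /andP[h1 h2] h3; rewrite /wtp /wtn !e.
    rewrite (ew A HA) (ew B HB); have -> // : compat t l (map f r) = compat t l r.
    rewrite /compat; apply: eq_in_all => i; rewrite mem_iota /= => hi.
    by rewrite e ?hl.
  rewrite -peval_Psum.
  have hlp : l \in permutations (iota 0 t).
    rewrite mem_permutations; apply: uniq_perm; first 2 last.
    - move=> v; rewrite mem_iota /=; apply/mapP/idP => [[i _ ->]|hv].
        by rewrite ffunE ltn_ord.
      exists (pi (Ordinal hv)); first by rewrite mem_enum.
      by rewrite ffunE permK.
    - rewrite map_inj_uniq ?enum_uniq // => i j; rewrite !ffunE => /val_inj; exact: perm_inj.
    - exact: iota_uniq.
  move: Hc; rewrite /chk /= => /allP/(_ l hlp) Hp.
  have := posok_gt0 Hp (x := d%:Z - 2).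
  rewrite pevalSh subrK; apply.
  by rewrite subr_ge0 lez_nat.
exists 2%N => d _ hd xi /imsetP[y _ ->].
rewrite (bigD1 y) ?class_refl //=.
apply: (lt_le_trans (Hpos d y hd)); rewrite lerDl sumr_ge0 // => p _.
exact: ltW (Hpos d p hd).
Qed.

Lemma nth_sx_inord n d (x : {ffun 'I_n.+1 -> 'I_d}) k : (k <= n)%N ->
  nth 0%N (sx x) k = x (inord k).
Proof. by move=> hk; have := nth_sx x (inord k); rewrite inordK. Qed.

Lemma Oplus_wtp n d (x : {ffun 'I_n.+1 -> 'I_d}) a b c :
  (a <= n)%N -> (b <= n)%N -> (c <= n)%N ->
  Oplus (x (inord a)) (x (inord b)) (x (inord c)) = Ov d (wtp (sx x) (a, b, c)).
Proof. by move=> ha hb hc; rewrite /Oplus /Ov /wtp /= !nth_sx_inord. Qed.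

Lemma C3 : chk 3 (0, 1, 2)%N (0, 1, 2)%N. Proof. by vm_compute. Qed.
Lemma C4 : chk 4 (0, 1, 2)%N (0, 1, 3)%N. Proof. by vm_compute. Qed.
Lemma C5 : chk 5 (0, 1, 2)%N (0, 3, 4)%N. Proof. by vm_compute. Qed.
Lemma C6 : chk 6 (0, 1, 2)%N (3, 4, 5)%N. Proof. by vm_compute. Qed.

Theorem proposition14 :
  class_sums_eventually_pos q3 /\ class_sums_eventually_pos q4 /\
  class_sums_eventually_pos q5 /\ class_sums_eventually_pos q6.
Proof.
split; last split; last split.
- apply: (@main 3 (0, 1, 2)%N (0, 1, 2)%N q3 erefl erefl _ C3).
  by move=> d x; rewrite /q3 /ent /= expr2 !Oplus_wtp.
- apply: (@main 4 (0, 1, 2)%N (0, 1, 3)%N q4 erefl erefl _ C4).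
  by move=> d x; rewrite /q4 /ent /= !Oplus_wtp.
- apply: (@main 5 (0, 1, 2)%N (0, 3, 4)%N q5 erefl erefl _ C5).
  by move=> d x; rewrite /q5 /ent /= !Oplus_wtp.
- apply: (@main 6 (0, 1, 2)%N (3, 4, 5)%N q6 erefl erefl _ C6).
  by move=> d x; rewrite /q6 /ent /= !Oplus_wtp.
Qed.
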